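(* Let $k$ and $k'$ be positive-definite kernels on $\Omega\subseteq\mathbb{R}^d$. The following are equivalent: (a) the nonparametric models with covariances $k$ and $k'$ are prediction-equivalent on $\Omega$, i.e. $(k;\emptyset)\sim(k';\emptyset)$; (b) for every finite $\mathcal{X}\subset\Omega$ and every $\sigma^2>0$, the smoother matrices $\mathbf{M}_{\mathcal{X}}=\mathbf{K}_{\mathcal{X}}(\mathbf{K}_{\mathcal{X}}+\sigma^2\mathbf{I})^{-1}$ and $\mathbf{M}'_{\mathcal{X}}=\mathbf{K}'_{\mathcal{X}}(\mathbf{K}'_{\mathcal{X}}+\sigma^2\mathbf{I})^{-1}$ are equal.
   Context: For $\mathcal{X}=\{x_1,\ldots,x_n\}$, $\mathbf{K}_{\mathcal{X}}=[k(x_i,x_j)]_{i,j}$ and $\mathbf{K}'_{\mathcal{X}}=[k'(x_i,x_j)]_{i,j}$. GP regression with prior covariance $k$ and observations $\mathbf{y}\in\mathbb{R}^n$ at $\mathcal{X}$ with noise variance $\sigma^2$ has predictive mean $\mathbb{E}_k(f(x)\mid\mathbf{y})=\mathbf{k}_{x,\mathcal{X}}(\mathbf{K}_{\mathcal{X}}+\sigma^2\mathbf{I})^{-1}\mathbf{y}$ and predictive variance $\mathrm{Var}_k(f(x)\mid\mathbf{y})=k(x,x)-\mathbf{k}_{x,\mathcal{X}}(\mathbf{K}_{\mathcal{X}}+\sigma^2\mathbf{I})^{-1}\mathbf{k}_{x,\mathcal{X}}^\top$, $\mathbf{k}_{x,\mathcal{X}}=[k(x,x_1),\ldots,k(x,x_n)]$.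 $(k;\emptyset)\sim(k';\emptyset)$ means: for every finite $\mathcal{X}\subset\Omega$, every $x\in\Omega$, $\mathbf{y}\in\mathbb{R}^{|\mathcal{X}|}$ and $\sigma^2>0$, the predictive means under $k$ and $k'$ are equal and the predictive variances are equal. *)

(* Defs.v *)
From HB Require Import structures.
From mathcomp Require Import all_boot all_order all_algebra.
From mathcomp Require Import reals.
Set Implicit Arguments. Unset Strict Implicit. Unset Printing Implicit Defensive.
Import Order.TTheory GRing.Theory Num.Theory.
Local Open Scope ring_scope.

Section GP.
Variables (R : realType) (d : nat).
Notation pt := 'rV[R]_d.

Definition gram (k : pt -> pt -> R) (n : nat) (X : 'I_n -> pt) : 'M[R]_n :=
  \matrix_(i, j) k (X i) (X j).

Definition kvec (k : pt -> pt -> R) (n : nat) (X : 'I_n -> pt) (x : pt) : 'rV[R]_n :=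
  \row_j k x (X j).

Definition pred_mean (k : pt -> pt -> R) (n : nat) (X : 'I_n -> pt)
    (s2 : R) (y : 'cV[R]_n) (x : pt) : R :=
  (kvec k X x *m invmx (gram k X + s2%:M) *m y) 0 0.

Definition pred_var (k : pt -> pt -> R) (n : nat) (X : 'I_n -> pt)
    (s2 : R) (x : pt) : R :=
  k x x - (kvec k X x *m invmx (gram k X + s2%:M) *m (kvec k X x)^T) 0 0.

Definition smoother (k : pt -> pt -> R) (n : nat) (X : 'I_n -> pt) (s2 : R)
    : 'M[R]_n :=
  gram k X *m invmx (gram k X + s2%:M).

(* positive-definite kernel on Omega (ML convention: symmetric and every
   Gram matrix of points of Omega is positive semidefinite) *)
Definition pd_kernel (Omega : pt -> Prop) (k : pt -> pt -> R) : Prop :=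
  (forall x y, Omega x -> Omega y -> k x y = k y x) /\
  (forall (n : nat) (X : 'I_n -> pt), (forall i, Omega (X i)) ->
     forall c : 'cV[R]_n, 0 <= (c^T *m gram k X *m c) 0 0).

(* (k; emptyset) ~ (k'; emptyset): prediction equivalence on Omega.
   A finite set X subset Omega is given by an injective enumeration 'I_n -> pt. *)
Definition pred_equiv (Omega : pt -> Prop) (k k' : pt -> pt -> R) : Prop :=
  forall (n : nat) (X : 'I_n -> pt), injective X -> (forall i, Omega (X i)) ->
  forall (x : pt), Omega x -> forall (y : 'cV[R]_n) (s2 : R), 0 < s2 ->
    pred_mean k X s2 y x = pred_mean k' X s2 y x /\
    pred_var k X s2 x = pred_var k' X s2 x.

End GP.

(* Main.v *)
Require Import Defs.
From HB Require Import structures.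
From mathcomp Require Import all_boot all_order all_algebra.
From mathcomp Require Import reals.
Import Order.TTheory GRing.Theory Num.Theory.
Local Open Scope ring_scope.

Lemma gram_unit (R : realType) (d : nat) (Omega : 'rV[R]_d -> Prop)
    (k : 'rV[R]_d -> 'rV[R]_d -> R) n (X : 'I_n -> 'rV[R]_d) s2 :
  pd_kernel Omega k -> (forall i, Omega (X i)) -> 0 < s2 ->
  gram k X + s2%:M \in unitmx.
Proof.
move=> [_ Hpsd] HX Hs.
rewrite unitmxE unitfE; apply/negP => /det0P [v vn0 Hv].
have := Hpsd n X HX v^T; rewrite trmxK.
have -> : v *m gram k X = - (s2 *: v).
  by apply/eqP; rewrite -subr_eq0 opprK -mul_mx_scalar -mulmxDr Hv.
rewrite mulNmx -scalemxAl !mxE oppr_ge0.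
set S := (v *m v^T) 0 0.
have SE : S = \sum_j v 0 j * v 0 j.
  by rewrite /S mxE; apply: eq_bigr => j _; rewrite mxE.
have S0 : 0 <= S by rewrite SE sumr_ge0 // => j _; rewrite -expr2 sqr_ge0.
move=> Hle.
have HS : S = \sum_j v 0 j * v^T j 0 by rewrite /S mxE.
rewrite -HS in Hle.
have Sz : S = 0.
  apply/eqP; rewrite eq_le S0 andbT.
  by rewrite -(pmulr_rle0 S Hs).
apply: (negP vn0); apply/eqP.
apply/matrixP => i j; rewrite (ord1 i) mxE.
have H0 : v 0 j * v 0 j = 0.
  apply: (@psumr_eq0P R _ predT (fun j => v 0 j * v 0 j)) => //.
    by move=> l _; rewrite -expr2 sqr_ge0.
  by rewrite -SE.
by move/eqP: H0; rewrite mulf_eq0 orbb => /eqP.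
Qed.

Theorem mainTheorem4 (R : realType) (d : nat) (Omega : 'rV[R]_d -> Prop)
    (k k' : 'rV[R]_d -> 'rV[R]_d -> R) :
  pd_kernel Omega k -> pd_kernel Omega k' ->
  (pred_equiv Omega k k' <->
   (forall (n : nat) (X : 'I_n -> 'rV[R]_d), injective X ->
      (forall i, Omega (X i)) -> forall s2 : R, 0 < s2 ->
      smoother k X s2 = smoother k' X s2)).
Proof.
move=> Hk Hk'; split.
- move=> Heq n X Xinj HX s2 Hs.
  apply/matrixP => i j.
  have [H _] := Heq n X Xinj HX (X i) (HX i) (delta_mx j 0) s2 Hs.
  have E : forall kk : 'rV[R]_d -> 'rV[R]_d -> R,
      pred_mean kk X s2 (delta_mx j 0) (X i) = smoother kk X s2 i j.
    move=> kk; rewrite /pred_mean /smoother.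
    have -> : kvec kk X (X i) = row i (gram kk X).
      by apply/rowP => l; rewrite !mxE.
    by rewrite -row_mul -colE !mxE.
  by rewrite -!E.
- move=> Hsm.
  have Hg : forall n (X : 'I_n -> 'rV[R]_d), injective X ->
      (forall i, Omega (X i)) -> gram k X = gram k' X.
    move=> n X Xinj HX.
    have Hs : (0 : R) < 1 by [].
    have U := @gram_unit _ _ _ _ _ _ _ Hk HX Hs.
    have U' := @gram_unit _ _ _ _ _ _ _ Hk' HX Hs.
    have := Hsm n X Xinj HX 1 Hs; rewrite /smoother.
    have M : forall A : 'M[R]_n, A + 1%:M \in unitmx ->
        A *m invmx (A + 1%:M) = 1%:M - invmx (A + 1%:M).
      move=> A UA.
      have E : A = (A + 1%:M) - 1%:M :> 'M[R]_n by rewrite addrK.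
      by rewrite {1}E mulmxBl mulmxV // mul1mx.
    rewrite (M _ U) (M _ U') => /eqP; rewrite (inj_eq (addrI _)) (inj_eq oppr_inj).
    move=> /eqP /(congr1 invmx); rewrite !invmxK => /eqP.
    by rewrite (inj_eq (addIr _)) => /eqP.
  have Hkk : forall x y, Omega x -> Omega y -> k x y = k' x y.
    move=> x y Ox Oy.
    have [<-|nxy] := eqVneq x y.
      have := Hg 1%N (fun _ => x) (fun a b _ => etrans (ord1 a) (esym (ord1 b)))
        (fun _ => Ox).
      by move=> /matrixP /(_ ord0 ord0); rewrite !mxE.
    pose X := fun i : 'I_2 => if i == ord0 then x else y.
    have Xinj : injective X.
      move=> a b; rewrite /X.
      case: eqP => ha; case: eqP => hb E.
      - by rewrite ha hb.
      - by move: nxy; rewrite E eqxx.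
      - by move: nxy; rewrite E eqxx.
      apply: val_inj; move: ha hb (ltn_ord a) (ltn_ord b).
      case: a => [[|[|a]] ?] //=; case: b => [[|[|b]] ?] //=.
      + by move=> /(_ (val_inj _)).
      + by move=> _ /(_ (val_inj _)).
    have := Hg 2%N X Xinj (fun i => if i == ord0 as b return Omega (if b then x else y) then Ox else Oy).
    by move=> /matrixP /(_ ord0 (lift ord0 ord0)); rewrite !mxE.
  move=> n X Xinj HX x Ox y s2 Hs.
  have G := Hg n X Xinj HX.
  have V : kvec k X x = kvec k' X x.
    by apply/rowP => j; rewrite !mxE Hkk.
  by rewrite /pred_mean /pred_var G V Hkk.
Qed.
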